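(* Let $G$ be a group of finite Morley rank whose Sylow $2$-subgroup is central. If $a,b\in G$ satisfy $a^b=a^{-1}$, then $a^2=1$.
   Context: $a^b=b^{-1}ab$. The hypothesis means that the Sylow $2$-subgroup (maximal $2$-subgroup) of $G$ is contained in $Z(G)$. *)

(* Defs.v *)
From Stdlib Require Import Arith.



Record gstruct := GStruct {
  gcar :> Type;
  gmul : gcar -> gcar -> gcar;
  ginv : gcar -> gcar;
  gone : gcar }.

Inductive gterm :=
  | tvar (n : nat)
  | tone
  | tmul (s t : gterm)
  | tinv (t : gterm).

Inductive gform :=
  | feq (s t : gterm)
  | fneg (f : gform)
  | fand (f g : gform)
  | fex (n : nat) (f : gform).   (* exists x_n, f *)

Definition upd (M : Type) (v : nat -> M) (n : nat) (x : M) : nat -> M :=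
  fun m => if Nat.eqb m n then x else v m.

Fixpoint eval (M : gstruct) (v : nat -> M) (t : gterm) : M :=
  match t with
  | tvar n => v n
  | tone => gone M
  | tmul s u => gmul M (eval M v s) (eval M v u)
  | tinv s => ginv M (eval M v s)
  end.

Fixpoint sat (M : gstruct) (v : nat -> M) (f : gform) : Prop :=
  match f with
  | feq s t => eval M v s = eval M v t
  | fneg g => ~ sat M v g
  | fand g h => sat M v g /\ sat M v h
  | fex n g => exists x : M, sat M (upd M v n x) g
  end.

Definition elem_emb (M N : gstruct) (e : M -> N) : Prop :=
  forall (f : gform) (v : nat -> M), sat M v f <-> sat N (fun n => e (v n)) f.

(* A definable subset of M (in the free variable x_0), with parameters:
   a formula together with an assignment of the remaining variables. *)
Definition dset (M : gstruct) : Type := (gform * (nat -> M))%type.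

Definition dmem (M : gstruct) (d : dset M) (x : M) : Prop :=
  sat M (upd M (snd d) 0 x) (fst d).

Fixpoint rk_ge (n : nat) (M : gstruct) (d : dset M) : Prop :=
  match n with
  | 0 => exists x : M, dmem M d x
  | S n' =>
      exists (N : gstruct) (e : M -> N), elem_emb M N e /\
      exists ds : nat -> dset N,
        (forall i x, dmem N (ds i) x -> dmem N (fst d, fun k => e (snd d k)) x) /\
        (forall i j x, i <> j -> dmem N (ds i) x -> dmem N (ds j) x -> False) /\
        (forall i, rk_ge n' N (ds i))
  end.

Definition finite_morley_rank (M : gstruct) : Prop :=
  exists n : nat, ~ rk_ge (S n) M (feq (tvar 0) (tvar 0), fun _ => gone M).

Section GroupNotions.
Variables (T : Type) (mul : T -> T -> T) (inv : T -> T) (one : T).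

Definition is_group : Prop :=
  (forall x y z, mul x (mul y z) = mul (mul x y) z) /\
  (forall x, mul one x = x) /\ (forall x, mul x one = x) /\
  (forall x, mul (inv x) x = one) /\ (forall x, mul x (inv x) = one).

Fixpoint gpow (x : T) (k : nat) : T :=
  match k with 0 => one | S k' => mul x (gpow x k') end.

Definition conjg (a b : T) : T := mul (inv b) (mul a b).

Definition is_subgroup (S : T -> Prop) : Prop :=
  S one /\ (forall x y, S x -> S y -> S (mul x y)) /\ (forall x, S x -> S (inv x)).

Definition is_2subgroup (S : T -> Prop) : Prop :=
  is_subgroup S /\ forall x, S x -> exists k, gpow x (2 ^ k) = one.

Definition is_sylow2 (S : T -> Prop) : Prop :=
  is_2subgroup S /\
  forall S', is_2subgroup S' -> (forall x, S x -> S' x) -> forall x, S' x -> S x.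

Definition central (x : T) : Prop := forall g, mul x g = mul g x.

End GroupNotions.

(* Main.v *)
Require Import Defs.
From Stdlib Require Import Lia Arith PeanoNat.
From Stdlib Require Import Classical ClassicalEpsilon.
From mathcomp Require ssreflect ssrbool classical_sets boolp.

Module ZZ.
Import ssreflect ssrbool boolp.
Lemma zorn_sets (U:Type) (P : (U->Prop)->Prop) (x0 : U->Prop) : P x0 ->
  (forall C : (U->Prop)->Prop, (forall X, C X -> P X) -> (exists X, C X) ->
     (forall X Y, C X -> C Y -> (forall u, X u -> Y u) \/ (forall u, Y u -> X u)) ->
     P (fun u => exists X, C X /\ X u)) ->
  exists S, P S /\ forall S', P S' -> (forall u, S u -> S' u) -> forall u, S' u -> S u.
Proof.
intros H0 Hch.
pose (R := fun (A B : {S | P S}) => asbool (forall u, proj1_sig A u -> proj1_sig B u)).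
destruct (@classical_sets.ZL_preorder {S | P S} (exist _ x0 H0) R) as [[S PS] HS].
- intros t. unfold R. cbv beta. apply/asboolP; auto.
- intros r s t H1 H2; unfold R; apply/asboolP; unfold R in H1, H2; move/asboolP: H1; move/asboolP: H2; auto.
- intros A HA.
  destruct (Classical_Prop.classic (exists X, A X)) as [[X AX]|NA].
  + assert (PU: P (fun u => exists Y, (exists pf : P Y, A (exist _ Y pf)) /\ Y u)).
    { apply Hch.
      - intros Y [pf _]; exact pf.
      - exists (proj1_sig X); destruct X as [X pf]; exists pf; exact AX.
      - intros Y Z [pY AY] [pZ AZ]. destruct (HA _ _ AY AZ) as [h|h];
        [left|right]; unfold R in h; move/asboolP: h; auto. }
    exists (exist _ _ PU). intros [Y pY] AY; unfold R; apply/asboolP; simpl; intros u Yu.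
    exists Y; split; [exists pY; exact AY| exact Yu].
  + exists (exist _ x0 H0). intros s As; exfalso; apply NA; eauto.
- exists S; split; [exact PS|]. intros S' PS' sub u Su.
  specialize (HS (exist _ S' PS')). 
  assert (h: R (exist _ S PS) (exist _ S' PS')) by (unfold R; apply/asboolP; exact sub).
  specialize (HS h). unfold R in HS; move/asboolP: HS => HS. exact (HS u Su).
Qed.
End ZZ.

Section Main.
Variables (T : Type) (mul : T -> T -> T) (inv : T -> T) (one : T).
Hypothesis HG : is_group T mul inv one.
Local Infix "**" := mul (at level 40, left associativity).
Let pw := gpow T mul one.

Lemma mA x y z : x ** (y ** z) = x ** y ** z. Proof. apply HG. Qed.
Lemma m1l x : one ** x = x. Proof. apply HG. Qed.
Lemma m1r x : x ** one = x. Proof. apply HG. Qed.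
Lemma mVl x : inv x ** x = one. Proof. apply HG. Qed.
Lemma mVr x : x ** inv x = one. Proof. apply HG. Qed.

Lemma canl x y z : x ** y = x ** z -> y = z.
Proof. intros H. rewrite <- (m1l y), <- (m1l z), <- (mVl x), <- !mA, H. reflexivity. Qed.

Lemma inv_uniq x y : y ** x = one -> y = inv x.
Proof. intros H. rewrite <- (m1r y), <- (mVr x), mA, H, m1l. reflexivity. Qed.

Lemma invM x y : inv (x ** y) = inv y ** inv x.
Proof. symmetry; apply inv_uniq. rewrite mA, <- (mA (inv y)), mVl, m1r, mVl. reflexivity. Qed.

Lemma inv1 : inv one = one.
Proof. symmetry; apply inv_uniq, m1l. Qed.

Lemma comm_inv x y : x ** y = y ** x -> inv x ** y = y ** inv x.
Proof.
  intros H. apply (canl x). rewrite mA, mVr, m1l.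
  rewrite mA, H, <- mA, mVr, m1r. reflexivity.
Qed.

Lemma pw_add x m n : pw x (m + n) = pw x m ** pw x n.
Proof. induction m; simpl. rewrite m1l; reflexivity. unfold pw in *; simpl. rewrite IHm, mA; reflexivity. Qed.

Lemma pw_mul x m n : pw x (m * n) = pw (pw x m) n.
Proof.
  revert m. induction n; intros m.
  - rewrite Nat.mul_0_r. reflexivity.
  - rewrite Nat.mul_succ_r, Nat.add_comm, pw_add, IHn. reflexivity.
Qed.

Lemma pw_one n : pw one n = one.
Proof. induction n; simpl; auto. unfold pw in *; simpl; rewrite IHn, m1l; reflexivity. Qed.

Lemma pw_comm x y n : x ** y = y ** x -> pw x n ** y = y ** pw x n.
Proof.
  intros H; induction n; unfold pw in *; simpl. rewrite m1l, m1r; reflexivity.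
  rewrite <- mA, IHn, !mA, H. reflexivity.
Qed.

Lemma pw_distr x y n : x ** y = y ** x -> pw (x ** y) n = pw x n ** pw y n.
Proof.
  intros H; induction n; unfold pw in *; simpl. rewrite m1l; reflexivity.
  rewrite IHn. rewrite <- !mA. f_equal. rewrite !mA. f_equal.
  symmetry. apply pw_comm. exact H.
Qed.

Lemma pw_inv x n : pw (inv x) n = inv (pw x n).
Proof.
  apply inv_uniq. rewrite <- pw_distr by (rewrite mVl, mVr; reflexivity).
  rewrite mVl. apply pw_one.
Qed.

Lemma pw_pow_S x k : pw x (2 ^ S k) = pw (x ** x) (2 ^ k).
Proof. replace (2 ^ S k) with (2 * 2 ^ k) by reflexivity. rewrite pw_mul. unfold pw; simpl. rewrite m1r. reflexivity. Qed.

Section AB.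
Variables a b : T.

Definition inA (w : T) : Prop :=
  w ** a = a ** w /\ w ** b = b ** w /\
  forall y, y ** a = a ** y -> y ** b = b ** y -> w ** y = y ** w.

Lemma inA_one : inA one.
Proof. split; [|split]; intros; rewrite ?m1l, ?m1r; auto. Qed.

Lemma inA_mul x y : inA x -> inA y -> inA (x ** y).
Proof.
  intros [x1 [x2 x3]] [y1 [y2 y3]]. split; [|split].
  - rewrite <- mA, y1, mA, x1, mA. reflexivity.
  - rewrite <- mA, y2, mA, x2, mA. reflexivity.
  - intros z h1 h2. rewrite <- mA, (y3 z h1 h2), mA, (x3 z h1 h2), mA. reflexivity.
Qed.

Lemma inA_inv x : inA x -> inA (inv x).
Proof.
  intros [x1 [x2 x3]]. split; [|split].
  - apply comm_inv; auto.
  - apply comm_inv; auto.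
  - intros z h1 h2. apply comm_inv; auto.
Qed.

Lemma inA_comm x y : inA x -> inA y -> x ** y = y ** x.
Proof. intros [_ [_ x3]] [y1 [y2 _]]. apply x3; auto. Qed.

Definition Hk (k : nat) (x : T) : Prop := exists w, inA w /\ x = pw w (2 ^ k).

Lemma Hk_one k : Hk k one.
Proof. exists one; split. apply inA_one. symmetry; apply pw_one. Qed.

Lemma Hk_mul k x y : Hk k x -> Hk k y -> Hk k (x ** y).
Proof.
  intros [w [hw ->]] [u [hu ->]]. exists (w ** u). split. apply inA_mul; auto.
  symmetry; apply pw_distr, inA_comm; auto.
Qed.

Lemma Hk_inv k x : Hk k x -> Hk k (inv x).
Proof.
  intros [w [hw ->]]. exists (inv w). split. apply inA_inv; auto.
  symmetry; apply pw_inv.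
Qed.

Lemma Hk_S k x : Hk (S k) x -> Hk k x.
Proof.
  intros [w [hw ->]]. exists (w ** w). split. apply inA_mul; auto. apply pw_pow_S.
Qed.

Lemma Hk_le k m x : k <= m -> Hk m x -> Hk k x.
Proof. induction 1; auto. intros h; apply IHle, Hk_S, h. Qed.

Definition fcomm (s t : gterm) := feq (tmul s t) (tmul t s).
Definition inAf : gform :=
  fand (fcomm (tvar 3) (tvar 1)) (fand (fcomm (tvar 3) (tvar 2))
   (fneg (fex 4 (fand (fcomm (tvar 4) (tvar 1)) (fand (fcomm (tvar 4) (tvar 2))
      (fneg (fcomm (tvar 3) (tvar 4)))))))).
Fixpoint pwt (t : gterm) (k : nat) : gterm :=
  match k with 0 => tone | S k' => tmul t (pwt t k') end.
Definition cosf (k : nat) : gform :=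
  fex 3 (fand inAf (feq (tvar 0) (tmul (tvar 5) (pwt (tvar 3) (2 ^ k))))).
Definition env (g : T) : nat -> T :=
  fun n => match n with 1 => a | 2 => b | _ => g end.

Let M := GStruct T mul inv one.

Lemma eval_pwt v t k : eval M v (pwt t k) = pw (eval M v t) k.
Proof. induction k; simpl; auto. rewrite IHk. reflexivity. Qed.

Lemma cos_sem k g x : dmem M (cosf k, env g) x <-> exists w, inA w /\ x = g ** pw w (2 ^ k).
Proof.
  unfold dmem, cosf, inAf, fcomm; simpl. split.
  - intros [w [[h1 [h2 h3]] h4]]. rewrite eval_pwt in h4. simpl in h4.
    exists w. split; auto. split; [|split]; auto.
    intros y e1 e2. apply NNPP. intros ne. apply h3. exists y. simpl. auto.
  - intros [w [[h1 [h2 h3]] h4]]. exists w. rewrite eval_pwt. simpl.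
    split; auto. split; [|split]; auto.
    intros [y [e1 [e2 e3]]]. apply e3. apply h3; auto.
Qed.

Lemma elem_id : elem_emb M M (fun x => x).
Proof. intros f v; apply iff_refl. Qed.

Section Rank.
Hypothesis nst : forall k, exists g, Hk k g /\ ~ Hk (S k) g.

Lemma coset_rank n : forall k g, rk_ge n M (cosf k, env g).
Proof.
  induction n; intros k g.
  - simpl. exists g. apply cos_sem. exists one. split. apply inA_one.
    rewrite pw_one, m1r. reflexivity.
  - pose (f := fun j => proj1_sig (constructive_indefinite_description _ (nst (k + j)))).
    assert (hf : forall j, Hk (k + j) (f j) /\ ~ Hk (S (k + j)) (f j))
      by (intros j; unfold f; destruct constructive_indefinite_description; auto).
    clearbody f.
    simpl. exists M, (fun x => x). split. apply elem_id.
    exists (fun j => (cosf (S (k + j)), env (g ** f j))). split; [|split].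
    + intros i x hx. apply cos_sem in hx. apply cos_sem.
      destruct hx as [w [hw ->]]. destruct (hf i) as [[u [hu ->]] _].
      assert (Hk k (pw u (2 ^ (k + i)) ** pw w (2 ^ S (k + i)))) as [z [hz ez]].
      { apply Hk_mul. apply (Hk_le k (k + i)). lia. exists u; auto.
        apply (Hk_le k (S (k + i))). lia. exists w; auto. }
      exists z. split; auto. rewrite <- mA, ez. reflexivity.
    + intros i j x nij hi hj. apply cos_sem in hi, hj.
      destruct hi as [w [hw ->]]. destruct hj as [u [hu e]].
      rewrite <- !mA in e. apply canl in e.
      assert (forall i j w u, i < j -> inA w -> inA u ->
                f i ** pw w (2 ^ S (k + i)) = f j ** pw u (2 ^ S (k + j)) -> False) as key.
      { clear i j nij w hw u hu e. intros i j w u lt hw hu e.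
        destruct (hf i) as [_ ni]. apply ni.
        assert (f i = f j ** pw u (2 ^ S (k + j)) ** inv (pw w (2 ^ S (k + i)))) as ->.
        { rewrite <- e, <- mA, mVr, m1r. reflexivity. }
        apply Hk_mul. apply Hk_mul.
        apply (Hk_le _ (k + j)). lia. apply hf.
        apply (Hk_le _ (S (k + j))). lia. exists u; auto.
        apply Hk_inv. exists w; auto. }
      destruct (Nat.lt_trichotomy i j) as [l|[l|l]].
      * exact (key i j w u l hw hu e).
      * exact (nij l).
      * exact (key j i u w l hu hw (eq_sym e)).
    + intros i. apply IHn.
Qed.

Lemma top_rank n : rk_ge (S n) M (feq (tvar 0) (tvar 0), fun _ => gone M).
Proof.
  pose proof (coset_rank (S n) 0 one) as h. simpl in h.
  destruct h as [N [e [he [ds [h1 [h2 h3]]]]]].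
  simpl. exists N, e. split; auto. exists ds. split; [|split]; auto.
  intros; reflexivity.
Qed.
End Rank.

Lemma stab : finite_morley_rank M -> exists k, forall x, Hk k x -> Hk (S k) x.
Proof.
  intros [n hn]. apply NNPP. intros ne. apply hn. apply top_rank.
  intros k. apply NNPP. intros ne2. apply ne. exists k. intros x hx.
  apply NNPP. intros hx2. apply ne2. exists x. auto.
Qed.
End AB.

Lemma x0_2sub (t : T) N : pw t N = one -> 0 < N ->
  is_subgroup T mul inv one (fun x => exists i, x = pw t i) /\
  forall x, (exists i, x = pw t i) -> pw x N = one.
Proof.
  intros hN hpos.
  assert (ord : forall i, pw t (N * i) = one).
  { intros i. rewrite pw_mul, hN. apply pw_one. }
  split; [split; [|split]|].
  - exists 0. reflexivity.
  - intros x y [i ->] [j ->]. exists (i + j). symmetry; apply pw_add.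
  - intros x [i ->]. exists (i * (N - 1)). symmetry. apply inv_uniq.
    rewrite <- pw_add. replace (i * (N - 1) + i) with (N * i) by nia. apply ord.
  - intros x [i ->]. rewrite <- pw_mul, Nat.mul_comm. apply ord.
Qed.

Lemma chain_2sub (t : T) (C : (T -> Prop) -> Prop) :
  (forall X, C X -> is_2subgroup T mul inv one X /\ X t) -> (exists X, C X) ->
  (forall X Y, C X -> C Y -> (forall u, X u -> Y u) \/ (forall u, Y u -> X u)) ->
  is_2subgroup T mul inv one (fun u => exists X, C X /\ X u) /\ (exists X, C X /\ X t).
Proof.
  intros hP [X0 hX0] tot. split.
  - split; [split; [|split]|].
    + exists X0. split; auto. apply hP; auto.
    + intros x y [X [hX hx]] [Y [hY hy]].
      destruct (tot X Y hX hY) as [s|s].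
      * exists Y. split; auto. apply (proj1 (proj1 (hP Y hY))); auto.
      * exists X. split; auto. apply (proj1 (proj1 (hP X hX))); auto.
    + intros x [X [hX hx]]. exists X. split; auto. apply (proj1 (hP X hX)); auto.
    + intros x [X [hX hx]]. apply (proj1 (hP X hX)); auto.
  - exists X0; split; auto. apply hP; auto.
Qed.

Lemma main_aux : finite_morley_rank (GStruct T mul inv one) ->
  (forall S : T -> Prop, is_sylow2 T mul inv one S -> forall s, S s -> central T mul s) ->
  forall a b : T, conjg T mul inv a b = inv a -> a ** a = one.
Proof.
  intros Hf Hsyl a b hab. unfold conjg in hab.
  destruct (stab a b Hf) as [k hk].
  assert (e1 : a ** b = b ** inv a).
  { rewrite <- hab, !mA, mVr, m1l. reflexivity. }
  assert (e2 : inv a ** b = b ** a).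
  { apply (canl a). rewrite mA, mVr, m1l, mA, e1, <- mA, mVl, m1r. reflexivity. }
  set (c := b ** b).
  assert (hc : inA a b c).
  { split; [|split].
    - unfold c. rewrite <- mA, <- e2, mA, <- e1, <- mA. reflexivity.
    - unfold c. rewrite mA. reflexivity.
    - intros y _ hy. unfold c. rewrite <- mA, <- hy, mA, <- hy, <- mA. reflexivity. }
  assert (hck : Hk a b k (pw c (2 ^ k))) by (exists c; auto).
  destruct (hk _ hck) as [z [hz ez]].
  destruct hz as [za [zb zc]].
  assert (zc' : z ** c = c ** z) by (apply zc; [exact (proj1 hc) | exact (proj1 (proj2 hc))]).
  set (t := b ** inv z).
  assert (izb : inv z ** b = b ** inv z) by (apply comm_inv; auto).
  assert (izc : inv z ** c = c ** inv z) by (apply comm_inv; auto).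
  assert (tt : t ** t = c ** (inv z ** inv z)).
  { unfold t, c. rewrite <- !mA. f_equal. rewrite !mA, izb. reflexivity. }
  assert (ht : pw t (2 ^ S k) = one).
  { rewrite pw_pow_S, tt, pw_distr.
    - rewrite ez, <- pw_pow_S, <- pw_distr, mVr. apply pw_one.
      rewrite mVr, mVl. reflexivity.
    - rewrite mA, <- izc, <- mA, <- izc, mA. reflexivity. }
  assert (hconj : inv t ** (a ** t) = inv a).
  { unfold t. rewrite invM. assert (inv (inv z) = z) as ->.
    { symmetry. apply inv_uniq, mVr. }
    rewrite (mA a b), e1, <- !mA. rewrite (mA (inv b) b), mVl, m1l.
    assert (h1 : inv a ** z = z ** inv a) by (apply comm_inv; auto).
    assert (h2 : inv z ** inv a = inv a ** inv z) by (apply comm_inv; auto).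
    rewrite <- h2, mA, mVr, m1l.
    reflexivity. }
  destruct (ZZ.zorn_sets T (fun S => is_2subgroup T mul inv one S /\ S t)
              (fun x => exists i, x = pw t i)) as [S [[HS St] Smax]].
  - destruct (x0_2sub t (2 ^ S k) ht) as [h1 h2].
    apply Nat.neq_0_lt_0, Nat.pow_nonzero. discriminate.
    split. split; auto. intros x hx. exists (S k). apply h2, hx.
    exists 1. unfold pw; simpl. rewrite m1r. reflexivity.
  - intros C hP hne tot. apply chain_2sub; auto.
  - assert (cen : central T mul t).
    { apply (Hsyl S); auto. split; auto. intros S' h' sub. apply Smax; auto. }
    assert (a = inv a).
    { rewrite <- hconj, <- (cen a), mA, mVl, m1l. reflexivity. }
    rewrite H at 2. apply mVr.
Qed.
End Main.

Theorem mainTheorem9 (T : Type) (mul : T -> T -> T) (inv : T -> T) (one : T) :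
  is_group T mul inv one ->
  finite_morley_rank (GStruct T mul inv one) ->
  (forall S : T -> Prop, is_sylow2 T mul inv one S ->
     forall s, S s -> central T mul s) ->
  forall a b : T, conjg T mul inv a b = inv a -> mul a a = one.
Proof. intros HG. apply main_aux; exact HG. Qed.
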